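(* Let $\mathcal{H}$ be a finite-dimensional Hilbert space and $\tau$ an ergodic quantum channel on $\mathcal{H}$ whose unique fixed density matrix is pure, $|\psi_1\rangle\langle\psi_1|$. Then $\tau$ is mixing, i.e. $\tau^n(\rho)\to|\psi_1\rangle\langle\psi_1|$ for every density matrix $\rho$ on $\mathcal{H}$.
   Context: A quantum channel is a linear, completely positive, trace-preserving map on the space of linear operators on $\mathcal{H}$. It is ergodic if it has exactly one fixed point in the set of density matrices on $\mathcal{H}$; it is mixing if there is a density matrix $\rho_*$ with $\tau^n(\rho)\to\rho_*$ for every density matrix $\rho$. *)

(* Defs.v *)
From HB Require Import structures.
From mathcomp Require Import all_boot all_order all_algebra.
From mathcomp Require Import all_classical all_reals all_analysis.
From mathcomp Require Import complex.
Import numFieldNormedType.Exports.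
Set Implicit Arguments. Unset Strict Implicit. Unset Printing Implicit Defensive.
Import Order.TTheory GRing.Theory Num.Theory.
Local Open Scope ring_scope.
Local Open Scope complex_scope.
Local Open Scope classical_set_scope.

Section QC.
Variables (R : realType) (d : nat).
Local Notation C := R[i].

Definition adj m n (A : 'M[C]_(m, n)) : 'M[C]_(n, m) :=
  (map_mx (@Num.conj C) A)^T.

(* positive semidefinite: <v, A v> >= 0 for every vector v
   (in C, 0 <= z means z is a nonnegative real) *)
Definition psd (A : 'M[C]_d) : Prop :=
  forall v : 'cV[C]_d, 0 <= (adj v *m A *m v) 0 0.

Definition density (rho : 'M[C]_d) : Prop := psd rho /\ \tr rho = 1.

(* positivity of a k x k block matrix with d x d blocks X a b *)
Definition block_psd (k : nat) (X : 'I_k -> 'I_k -> 'M[C]_d) : Prop :=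
  forall v : 'I_k -> 'cV[C]_d,
    0 <= \sum_(a < k) \sum_(b < k) (adj (v a) *m X a b *m v b) 0 0.

(* id_k (x) T preserves positivity for every k *)
Definition completely_positive (T : 'M[C]_d -> 'M[C]_d) : Prop :=
  forall (k : nat) (X : 'I_k -> 'I_k -> 'M[C]_d),
    block_psd X -> block_psd (fun a b => T (X a b)).

Definition trace_preserving (T : 'M[C]_d -> 'M[C]_d) : Prop :=
  forall A, \tr (T A) = \tr A.

Definition quantum_channel (T : 'M[C]_d -> 'M[C]_d) : Prop :=
  linear T /\ completely_positive T /\ trace_preserving T.

Definition ergodic (T : 'M[C]_d -> 'M[C]_d) : Prop :=
  exists rho, density rho /\ T rho = rho /\
    forall sigma, density sigma -> T sigma = sigma -> sigma = rho.

(* entrywise convergence (real and imaginary parts) of a matrix sequence;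
   in finite dimension this is convergence in any norm *)
Definition mx_cvg (M : nat -> 'M[C]_d) (L : 'M[C]_d) : Prop :=
  forall i j : 'I_d,
    ((fun n => complex.Re (M n i j)) : R^nat) @ \oo --> (complex.Re (L i j) : R) /\
    ((fun n => complex.Im (M n i j)) : R^nat) @ \oo --> (complex.Im (L i j) : R).

Definition mixing (T : 'M[C]_d -> 'M[C]_d) : Prop :=
  exists rho_star, density rho_star /\
    forall rho, density rho -> mx_cvg (fun n => iter n T rho) rho_star.

End QC.

(* Main.v *)
Require Import Defs.
From HB Require Import structures.
From mathcomp Require Import all_boot all_order all_algebra.
From mathcomp Require Import all_classical all_reals all_analysis.
From mathcomp Require Import complex.
From mathcomp Require Import ring lra.
Import Order.TTheory GRing.Theory Num.Theory.
Local Open Scope ring_scope.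
Local Open Scope complex_scope.
Local Open Scope classical_set_scope.
Import numFieldNormedType.Exports.
Set Implicit Arguments. Unset Strict Implicit. Unset Printing Implicit Defensive.

Section A.
Variables (R : realType) (d : nat).
Local Notation C := R[i].
Local Notation M := 'M[C]_d.
Implicit Types (X Y : M).

Lemma ReD (x y : C) : complex.Re (x + y) = complex.Re x + complex.Re y.
Proof. by case: x; case: y. Qed.
Lemma ImD (x y : C) : complex.Im (x + y) = complex.Im x + complex.Im y.
Proof. by case: x; case: y. Qed.
Lemma ReN (x : C) : complex.Re (- x) = - complex.Re x.
Proof. by case: x. Qed.
Lemma ImN (x : C) : complex.Im (- x) = - complex.Im x.
Proof. by case: x. Qed.
Lemma ReB (x y : C) : complex.Re (x - y) = complex.Re x - complex.Re y.
Proof. by rewrite ReD ReN. Qed.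
Lemma ImB (x y : C) : complex.Im (x - y) = complex.Im x - complex.Im y.
Proof. by rewrite ImD ImN. Qed.
Lemma ReM (x y : C) : complex.Re (x * y) = complex.Re x * complex.Re y - complex.Im x * complex.Im y.
Proof. by case: x; case: y => *; simpc. Qed.
Lemma ImM (x y : C) : complex.Im (x * y) = complex.Re x * complex.Im y + complex.Im x * complex.Re y.
Proof. by case: x; case: y => *; simpc. Qed.
Lemma Re_sum I (r : seq I) (P : pred I) (F : I -> C) :
  complex.Re (\sum_(i <- r | P i) F i) = \sum_(i <- r | P i) complex.Re (F i).
Proof. by elim/big_rec2: _ => // i y x _ <-; rewrite ReD. Qed.
Lemma Im_sum I (r : seq I) (P : pred I) (F : I -> C) :
  complex.Im (\sum_(i <- r | P i) F i) = \sum_(i <- r | P i) complex.Im (F i).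
Proof. by elim/big_rec2: _ => // i y x _ <-; rewrite ImD. Qed.

Definition lfun (L : M -> C) := forall a X Y, L (a *: X + Y) = a * L X + L Y.

Definition close X Y (e : R) := forall i j,
  `|complex.Re (X i j - Y i j)| <= e /\ `|complex.Im (X i j - Y i j)| <= e.

Lemma lin_bound L : lfun L -> exists K : R, 0 <= K /\
  forall X Y e, close X Y e ->
  `|complex.Re (L X - L Y)| <= K * e /\ `|complex.Im (L X - L Y)| <= K * e.
Proof.
move=> HL.
have L0 : L 0 = 0.
  have := HL 1 0 0; rewrite scale1r addr0 mul1r => h.
  by apply/esym/(@addrI _ (L 0)); rewrite addr0 -h.
have LD X Y : L (X + Y) = L X + L Y by rewrite -{1}(scale1r X) HL mul1r.
have LZ a X : L (a *: X) = a * L X by rewrite -(addr0 (a *: X)) HL L0 addr0.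
have LN X : L (- X) = - L X by rewrite -scaleN1r LZ mulN1r.
have Lsum I (r : seq I) (P : pred I) (F : I -> M) :
    L (\sum_(i <- r | P i) F i) = \sum_(i <- r | P i) L (F i).
  by elim/big_rec2: _ => // i y x _ <-; rewrite LD.
pose c i j := L (delta_mx i j).
pose K := \sum_i \sum_j (`|complex.Re (c i j)| + `|complex.Im (c i j)|).
have K0 : 0 <= K by apply: sumr_ge0 => i _; apply: sumr_ge0 => j _; apply: addr_ge0.
exists K; split => // X Y e H.
have E : L X - L Y = \sum_i \sum_j (X i j - Y i j) * c i j.
  rewrite -LN -LD {1}(matrix_sum_delta (X - Y)) Lsum.
  by apply: eq_bigr => i _; rewrite Lsum; apply: eq_bigr => j _; rewrite LZ !mxE.
rewrite E Re_sum Im_sum.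
split.
- apply: le_trans (ler_norm_sum _ _ _) _.
  rewrite /K mulr_suml; apply: ler_sum => i _.
  rewrite Re_sum; apply: le_trans (ler_norm_sum _ _ _) _.
  rewrite mulr_suml; apply: ler_sum => j _.
  have [h1 h2] := H i j.
  rewrite ReM; apply: le_trans (ler_normB _ _) _.
  rewrite !normrM mulrDl; apply: lerD.
    by rewrite mulrC; apply: ler_wpM2l.
  by rewrite mulrC; apply: ler_wpM2l.
- apply: le_trans (ler_norm_sum _ _ _) _.
  rewrite /K mulr_suml; apply: ler_sum => i _.
  rewrite Im_sum; apply: le_trans (ler_norm_sum _ _ _) _.
  rewrite mulr_suml; apply: ler_sum => j _.
  have [h1 h2] := H i j.
  rewrite ImM; apply: le_trans (ler_normD _ _) _.
  rewrite !normrM mulrDl addrC; apply: lerD.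
    by rewrite mulrC; apply: ler_wpM2l.
  by rewrite mulrC; apply: ler_wpM2l.
Qed.

Definition clus (s : nat -> M) (sg : M) := forall e : R, 0 < e -> forall N0,
  exists N, (N0 <= N)%N /\ close (s N) sg e.

Lemma exists_clus (s : nat -> M) :
  (forall n i j, `|complex.Re (s n i j)| <= 1 /\ `|complex.Im (s n i j)| <= 1) ->
  exists sg, clus s sg.
Proof.
move=> Hb.
pose n := #|{: 'I_d * 'I_d * bool}|.
pose emb (X : M) : 'rV[R]_n := \row_k (let x := enum_val k in
  if x.2 then complex.Re (X x.1.1 x.1.2) else complex.Im (X x.1.1 x.1.2)).
have cpt := @rV_compact R^o n (fun _ => `[-1, 1]%classic) (fun _ => @segment_compact R _ _).
have hF : ((fun N => emb (s N)) @ \oo)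
    [set v : 'rV[R^o]_n | forall i, `[-1, 1]%classic (v ord0 i)].
  exists 0%N => // N _ i /=; rewrite mxE; case: (enum_val i) => [[a b] []] /=.
  by have [h1 h2] := Hb N a b; rewrite in_itv /= -ler_norml.
  by have [h1 h2] := Hb N a b; rewrite in_itv /= -ler_norml.
have [p [Ap clp]] := cpt _ _ hF.
pose sg : M := \matrix_(i, j) ((p ord0 (enum_rank (i, j, true))) +i* (p ord0 (enum_rank (i, j, false)))).
exists sg => e e0 N0.
have FA : ((fun N => emb (s N)) @ \oo) [set v | exists N, (N0 <= N)%N /\ v = emb (s N)].
  by exists N0 => // N hN; exists N.
have [v [[N [hN ->]] hb]] := clp _ _ FA (nbhsx_ballx p e e0).
exists N; split => // i j.
move: hb => [_ hb].
have := hb ord0 (enum_rank (i, j, true)); have := hb ord0 (enum_rank (i, j, false)).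
rewrite /ball /= /emb !mxE !enum_rankK /= => h2 h1.
rewrite ReB ImB /= !(distrC _ (p _ _)).
by split; apply: ltW.
Qed.

Lemma abs_le_eps (x : R) : (forall e, 0 < e -> `|x| <= e) -> x = 0.
Proof.
move=> H; apply/eqP; rewrite -normr_eq0 eq_le normr_ge0 andbT.
by apply/ler_addgt0Pr => e e0; rewrite add0r; apply: H.
Qed.

Lemma cplx_eq0 (x : C) : complex.Re x = 0 -> complex.Im x = 0 -> x = 0.
Proof. by case: x => a b /= -> ->. Qed.

Lemma clus_approx L s sg : lfun L -> clus s sg -> forall e, 0 < e -> forall N0,
  exists N, (N0 <= N)%N /\ `|complex.Re (L (s N) - L sg)| <= e /\
                           `|complex.Im (L (s N) - L sg)| <= e.
Proof.
move=> HL Hc e e0 N0; have [K [K0 HK]] := lin_bound HL.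
have K1 : 0 < K + 1 by rewrite ltr_wpDl.
have e1 : 0 < e / (K + 1) by rewrite divr_gt0.
have [N [hN hc]] := Hc _ e1 N0; exists N; split => //.
have [h1 h2] := HK _ _ _ hc.
have Ke : K * (e / (K + 1)) <= e.
  rewrite mulrCA ler_piMr ?(ltW e0) // ler_pdivrMr // mul1r.
  by rewrite lerDl.
by split; apply: le_trans Ke.
Qed.

Lemma clus_lim L s sg c : lfun L -> clus s sg ->
  (forall e, 0 < e -> exists N1, forall N, (N1 <= N)%N ->
     `|complex.Re (L (s N) - c)| <= e /\ `|complex.Im (L (s N) - c)| <= e) ->
  L sg = c.
Proof.
move=> HL Hc H; apply/eqP; rewrite -subr_eq0; apply/eqP.
have key : forall e, 0 < e -> `|complex.Re (L sg - c)| <= e /\ `|complex.Im (L sg - c)| <= e.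
  move=> e e0; have e2 : 0 < e / 2 by rewrite divr_gt0.
  have [N1 HN1] := H _ e2.
  have [N [hN [a1 a2]]] := clus_approx HL Hc e2 N1.
  have [b1 b2] := HN1 _ hN.
  have E : L sg - c = (L (s N) - c) - (L (s N) - L sg) by ring.
  rewrite E ReB ImB; split.
    apply: le_trans (ler_normB _ _) _; rewrite [e]splitr; exact: lerD.
  apply: le_trans (ler_normB _ _) _; rewrite [e]splitr; exact: lerD.
by apply: cplx_eq0; apply: abs_le_eps => e e0; have [] := key e e0.
Qed.

Definition prb (b : bool) (z : C) := if b then complex.Re z else complex.Im z.

Lemma clus_cvg1 (s : nat -> M) (Lm : M) (b : bool) i j :
  (forall n i j, `|complex.Re (s n i j)| <= 1 /\ `|complex.Im (s n i j)| <= 1) ->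
  (forall phi : nat -> nat, (forall k, (k <= phi k)%N) ->
     forall sg, clus (fun k => s (phi k)) sg -> sg = Lm) ->
  (fun n => prb b (s n i j)) @ \oo --> prb b (Lm i j).
Proof.
move=> Hb H; apply/cvgrPdist_le => e e0.
case: (pselect (\forall t \near \oo, `|prb b (Lm i j) - prb b (s t i j)| <= e)) => // nH.
exfalso.
have ex : forall k, exists N, (k <= N)%N /\ e < `|prb b (Lm i j) - prb b (s N i j)|.
  move=> k; apply: contrapT => nk; apply: nH; exists k => // N hN /=.
  case: (boolP (`|prb b (Lm i j) - prb b (s N i j)| <= e)) => // hle; exfalso.
  by apply: nk; exists N; split => //; rewrite ltNge.
have [phi hphi] := choice ex.
have [sg csg] := @exists_clus (fun k => s (phi k)) (fun n => Hb (phi n)).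
have sgL := H phi (fun k => (hphi k).1) sg csg.
have e2 : 0 < e / 2 by rewrite divr_gt0.
have [N [_ hc]] := csg _ e2 0%N.
have [h1 h2] := hc i j; rewrite sgL in h1 h2.
have := (hphi N).2; rewrite distrC.
have lt2 : e / 2 < e by rewrite ltr_pdivrMr // ltr_pMr // ltr1n.
by case: b {hphi ex nH} => /=; rewrite -?ReB -?ImB => h; [move: h1|move: h2] => h';
  have := le_lt_trans h' lt2; rewrite ltNge (ltW h) //.
Qed.

Lemma clus_cvg (s : nat -> M) (Lm : M) :
  (forall n i j, `|complex.Re (s n i j)| <= 1 /\ `|complex.Im (s n i j)| <= 1) ->
  (forall phi : nat -> nat, (forall k, (k <= phi k)%N) ->
     forall sg, clus (fun k => s (phi k)) sg -> sg = Lm) ->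
  mx_cvg s Lm.
Proof.
move=> Hb H i j; split.
  exact: (@clus_cvg1 s Lm true i j Hb H).
exact: (@clus_cvg1 s Lm false i j Hb H).
Qed.

End A.

Section S.
Variables (R : realType) (d : nat).
Local Notation C := R[i].
Local Notation M := 'M[C]_d.
Local Notation V := 'cV[C]_d.
Implicit Types (A B X Y Z : M) (v w : V).

Lemma adjD m n (A B : 'M[C]_(m,n)) : adj (A + B) = adj A + adj B.
Proof. by apply/matrixP=> i j; rewrite !mxE rmorphD. Qed.
Lemma adjZ m n a (A : 'M[C]_(m,n)) : adj (a *: A) = Num.conj a *: adj A.
Proof. by apply/matrixP=> i j; rewrite !mxE rmorphM. Qed.
Lemma adjN m n (A : 'M[C]_(m,n)) : adj (- A) = - adj A.
Proof. by apply/matrixP=> i j; rewrite !mxE rmorphN. Qed.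
Lemma adjB m n (A B : 'M[C]_(m,n)) : adj (A - B) = adj A - adj B.
Proof. by rewrite adjD adjN. Qed.
Lemma adjM m n p (A : 'M[C]_(m,n)) (B : 'M[C]_(n,p)) : adj (A *m B) = adj B *m adj A.
Proof.
apply/matrixP=> i j; rewrite !mxE rmorph_sum; apply: eq_bigr => k _.
by rewrite !mxE rmorphM mulrC.
Qed.
Lemma adjK m n (A : 'M[C]_(m,n)) : adj (adj A) = A.
Proof. by apply/matrixP=> i j; rewrite !mxE conjCK. Qed.
Lemma adj1 : adj (1%:M : M) = 1%:M.
Proof. by apply/matrixP=> i j; rewrite !mxE conjC_nat eq_sym. Qed.

Lemma adjE m n (A : 'M[C]_(m,n)) i j : adj A i j = Num.conj (A j i).
Proof. by rewrite !mxE. Qed.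

Definition q (v : V) (A : M) (w : V) : C := (adj v *m A *m w) 0 0.

Lemma qD v A B w : q v (A + B) w = q v A w + q v B w.
Proof. by rewrite /q mulmxDr mulmxDl mxE. Qed.
Lemma qZ v a A w : q v (a *: A) w = a * q v A w.
Proof. by rewrite /q -scalemxAr -scalemxAl mxE. Qed.
Lemma qN v A w : q v (- A) w = - q v A w.
Proof. by rewrite -scaleN1r qZ mulN1r. Qed.
Lemma qB v A B w : q v (A - B) w = q v A w - q v B w.
Proof. by rewrite qD qN. Qed.
Lemma q0 v w : q v 0 w = 0.
Proof. by rewrite /q mulmx0 mul0mx mxE. Qed.
Lemma q_sum v I (r : seq I) P (F : I -> M) w :
  q v (\sum_(i <- r | P i) F i) w = \sum_(i <- r | P i) q v (F i) w.
Proof.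
elim/big_rec2: _ => [|i y A _ <-]; first by rewrite q0.
by rewrite qD.
Qed.
Lemma qDl v1 v2 A w : q (v1 + v2) A w = q v1 A w + q v2 A w.
Proof. by rewrite /q adjD !mulmxDl mxE. Qed.
Lemma qZl a v A w : q (a *: v) A w = Num.conj a * q v A w.
Proof. by rewrite /q adjZ -!scalemxAl mxE. Qed.
Lemma qDr v A w1 w2 : q v A (w1 + w2) = q v A w1 + q v A w2.
Proof. by rewrite /q mulmxDr mxE. Qed.
Lemma qZr v A a w : q v A (a *: w) = a * q v A w.
Proof. by rewrite /q -scalemxAr mxE. Qed.
Lemma qM v A B w : q v (A *m B) w = q (adj A *m v) B w.
Proof. by rewrite /q adjM adjK !mulmxA. Qed.
Lemma qMr v A B w : q v (A *m B) w = q v A (B *m w).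
Proof. by rewrite /q !mulmxA. Qed.
Lemma qE v A w : q v A w = \sum_k \sum_l Num.conj (v k 0) * A k l * w l 0.
Proof.
rewrite /q mxE; under eq_bigr do rewrite mxE big_distrl.
rewrite exchange_big; apply: eq_bigr => k _; apply: eq_bigr => l _ /=.
by rewrite !mxE.
Qed.


Lemma psd_q A v : psd A -> 0 <= q v A v.
Proof. by move=> H; apply: H. Qed.

Lemma psd_add A B : psd A -> psd B -> psd (A + B).
Proof. by move=> HA HB v; have := qD v A B v; rewrite /q => ->; apply: addr_ge0. Qed.

Lemma psd_scale (c : C) A : 0 <= c -> psd A -> psd (c *: A).
Proof. by move=> Hc HA v; have := qZ v c A v; rewrite /q => ->; apply: mulr_ge0. Qed.

Lemma psd_conj (B : M) A : psd A -> psd (B *m A *m adj B).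
Proof. by move=> HA v; have := psd_q (adj B *m v) HA; rewrite -qM -qMr. Qed.

Lemma psd_sum I (r : seq I) (P : pred I) (F : I -> M) :
  (forall i, P i -> psd (F i)) -> psd (\sum_(i <- r | P i) F i).
Proof.
move=> H; elim/big_rec: _ => [|i A Pi HA]; last by apply: psd_add => //; apply: H.
by move=> v; have := q0 v v; rewrite /q => ->.
Qed.

Definition ev (k : 'I_d) : V := delta_mx k 0.

Lemma q_ev A k l : q (ev k) A (ev l) = A k l.
Proof.
rewrite qE (bigD1 k) //= [X in _ + X]big1 ?addr0 => [|i ik]; last first.
  by apply: big1 => j _; rewrite !mxE (negbTE ik) rmorph0 !mul0r.
rewrite (bigD1 l) //= [X in _ + X]big1 ?addr0 => [|j jl]; last by rewrite !mxE (negbTE jl) !mulr0.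
by rewrite !mxE !eqxx conjC1 mul1r mulr1.
Qed.

Lemma psd_diag A k : psd A -> 0 <= A k k.
Proof. by move=> H; rewrite -q_ev; apply: psd_q. Qed.

Lemma psd_tr A : psd A -> 0 <= \tr A.
Proof. by move=> H; rewrite /mxtrace; apply: sumr_ge0 => k _; apply: psd_diag. Qed.

Lemma psd_diag_le_tr A k : psd A -> A k k <= \tr A.
Proof.
move=> H; rewrite /mxtrace (bigD1 k) //= lerDl.
by apply: sumr_ge0 => i _; apply: psd_diag.
Qed.


Lemma psd_quad A i j c : psd A ->
  0 <= A i i + c * A i j + Num.conj c * A j i + Num.conj c * c * A j j.
Proof.
move=> H; have := psd_q (ev i + c *: ev j) H.
rewrite !(qDl, qDr, qZl, qZr) !q_ev.
by rewrite !addrA mulrA.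
Qed.

Lemma psd_herm A i j : psd A -> A j i = Num.conj (A i j).
Proof.
move=> H.
have h1 := psd_quad i j 1 H; have h2 := psd_quad i j 'i H.
have hi := psd_diag i H; have hj := psd_diag j H.
move: h1 h2 hi hj; case: (A i i) => a1 a2; case: (A j j) => b1 b2.
case: (A i j) => x1 x2; case: (A j i) => y1 y2.
rewrite !lecE /=; simpc.
move=> /andP[/eqP e1 _] /andP[/eqP e2 _] /andP[/eqP e3 _] /andP[/eqP e4 _].
have -> : y1 = x1 by lra.
by have -> : y2 = - x2 by lra.
Qed.

Lemma density_bound A i j : density A ->
  `|complex.Re (A i j)| <= 1 /\ `|complex.Im (A i j)| <= 1.
Proof.
move=> [H Htr].
have h1 := psd_quad i j 1 H; have h2 := psd_quad i j (-1) H.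
have h3 := psd_quad i j 'i H; have h4 := psd_quad i j (-'i) H.
have hi := psd_diag i H; have hj := psd_diag j H.
have ti := psd_diag_le_tr i H; have tj := psd_diag_le_tr j H.
rewrite Htr in ti tj.
move: h1 h2 h3 h4 hi hj ti tj; case: (A i i) => a1 a2; case: (A j j) => b1 b2.
case: (A i j) => x1 x2; case: (A j i) => y1 y2.
rewrite !lecE /=; simpc.
move=> /andP[/eqP e1 f1] /andP[/eqP e2 f2] /andP[/eqP e3 f3] /andP[/eqP e4 f4].
move=> /andP[/eqP e5 f5] /andP[/eqP e6 f6] /andP[_ f7] /andP[_ f8].
by rewrite !ler_norml; split; apply/andP; split; lra.
Qed.

Lemma lfun_q v : lfun (fun X => q v X v).
Proof. by move=> a X Y; rewrite qD qZ. Qed.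
Lemma lfun_tr : lfun (@mxtrace C d).
Proof. by move=> a X Y; rewrite mxtraceD mxtraceZ. Qed.

Lemma clus_density (s : nat -> M) sg : (forall n, density (s n)) -> clus s sg -> density sg.
Proof.
move=> Hs Hc; split.
  move=> v; set z := q v sg v.
  have ap := clus_approx (lfun_q v) Hc.
  have hI : complex.Im z = 0.
    apply: abs_le_eps => e e0; have [N [_ [_ h2]]] := ap e e0 0%N.
    have := psd_q v (Hs N).1; rewrite lecE => /andP[/eqP hi _].
    by move: h2; rewrite ImB hi /= sub0r normrN.
  have hR : 0 <= complex.Re z.
    apply/ler_addgt0Pr => e e0; have [N [_ [h1 _]]] := ap e e0 0%N.
    have := psd_q v (Hs N).1; rewrite lecE => /andP[_ hr].
    move: h1; rewrite ReB ler_norml => /andP[_ h]; rewrite /= in hr; lra.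
  by rewrite lecE hI eqxx.
apply: (clus_lim lfun_tr Hc) => e e0; exists 0%N => N _.
by rewrite (Hs N).2 subrr /= normr0; split; apply: ltW.
Qed.

Variable psi : V.
Hypothesis hpsi : (adj psi *m psi) 0 0 = 1.
Definition P : M := locked (psi *m adj psi).
Definition Q : M := locked (1%:M - P).
Lemma PE : P = psi *m adj psi. Proof. by rewrite /P -lock. Qed.
Lemma QE : Q = 1%:M - P. Proof. by rewrite /Q -lock. Qed.

Lemma psi_n : adj psi *m psi = 1%:M.
Proof. by apply/matrixP=> i j; rewrite !ord1 hpsi mxE. Qed.

Lemma adjP : adj P = P.
Proof. by rewrite PE adjM adjK. Qed.
Lemma PP : P *m P = P.
Proof. by rewrite PE mulmxA -(mulmxA psi) psi_n mul_mx_scalar scale1r. Qed.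
Lemma adjQ : adj Q = Q.
Proof. by rewrite QE adjB adj1 adjP. Qed.
Lemma QQ : Q *m Q = Q.
Proof. by rewrite QE mulmxBl mul1mx mulmxBr mulmx1 PP subrr subr0. Qed.
Lemma PQ_id : P + Q = 1%:M.
Proof. by rewrite QE addrC subrK. Qed.

Lemma qP v w : q v P w = Num.conj ((adj psi *m v) 0 0) * (adj psi *m w) 0 0.
Proof.
rewrite /q PE mulmxA -(mulmxA _ (adj psi)) [in LHS]mxE big_ord1.
have -> : adj v *m psi = adj (adj psi *m v) by rewrite adjM adjK.
by rewrite adjE.
Qed.

Lemma psd_P : psd P.
Proof. by move=> v; have := qP v v; rewrite /q => ->; rewrite mulrC mul_conjC_ge0. Qed.

Lemma qpsiP : q psi P psi = 1.
Proof. by rewrite qP hpsi conjC1 mulr1. Qed.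

Lemma trP : \tr P = 1.
Proof. by rewrite PE mxtrace_mulC psi_n mxtrace1. Qed.

Lemma mx11E (A : 'M[C]_1) : A = (A 0 0)%:M.
Proof. by apply/matrixP=> i j; rewrite !ord1 !mxE eqxx. Qed.

Lemma PXP X : P *m X *m P = q psi X psi *: P.
Proof.
rewrite PE /q !mulmxA -(mulmxA psi) -(mulmxA psi).
by rewrite {1}[adj psi *m X *m psi]mx11E mul_mx_scalar -scalemxAl.
Qed.

Lemma tr_qpsi Z : \tr (P *m Z) = q psi Z psi.
Proof.
by rewrite PE mxtrace_mulC mulmxA mxtrace_mulC mulmxA /q /mxtrace big_ord1.
Qed.

Lemma trQZQ Z : \tr (Q *m Z *m Q) = \tr Z - q psi Z psi.
Proof.
rewrite mxtrace_mulC mulmxA QQ QE mulmxBl mul1mx linearB /=.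
by rewrite tr_qpsi.
Qed.

Lemma q_le_tr Z : psd Z -> q psi Z psi <= \tr Z.
Proof.
move=> HZ; rewrite -subr_ge0 -trQZQ; apply: psd_tr.
by rewrite -{2}adjQ; apply: psd_conj.
Qed.


Lemma t_trick (c g : C) : 0 <= g ->
  (forall t : R, 0 <= t%:C * c + (t * t)%:C * g) -> c = 0.
Proof.
move=> hg H; case: c H => c1 c2 H; case: g hg H => g1 g2 hg H.
have h1 := H 1; pose t := - c1 / (g1 + 1); have h2 := H t.
move: h1 h2 hg; rewrite !lecE /=; simpc.
move=> /andP[/eqP e1 f1] /andP[/eqP e2 f2] /andP[/eqP e3 f3].
have ht : t * (g1 + 1) = - c1.
  rewrite /t mulrAC -mulrA divff ?mulr1 //; apply: lt0r_neq0; lra.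
have c20 : c2 = 0 by lra.
have tt : t * t <= 0 by nra.
have t0 : t = 0 by nra.
have c10 : c1 = 0 by nra.
by rewrite c10 c20.
Qed.

Lemma conjR (t : R) : Num.conj (t%:C) = t%:C :> C.
Proof. exact: conjc_real. Qed.

Variable T : M -> M.
Hypothesis Tlin : linear T.
Hypothesis Tcp : completely_positive T.
Hypothesis Ttp : trace_preserving T.
Hypothesis TP : T P = P.

Lemma TD A B : T (A + B) = T A + T B.
Proof. by have := Tlin 1 A B; rewrite !scale1r. Qed.
Lemma T0 : T 0 = 0.
Proof. by apply: (@addrI _ (T 0)); rewrite -TD !addr0. Qed.
Lemma TZ a A : T (a *: A) = a *: T A.
Proof. by have := Tlin a A 0; rewrite !addr0 T0 addr0. Qed.
Lemma TN A : T (- A) = - T A.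
Proof. by rewrite -scaleN1r TZ scaleN1r. Qed.
Lemma TB A B : T (A - B) = T A - T B.
Proof. by rewrite TD TN. Qed.
Lemma T_sum I (r : seq I) (Pr : pred I) (F : I -> M) :
  T (\sum_(i <- r | Pr i) F i) = \sum_(i <- r | Pr i) T (F i).
Proof.
elim/big_rec2: _ => [|i y A _ <-]; first by rewrite T0.
by rewrite TD.
Qed.

Lemma Tpsd X : psd X -> psd (T X).
Proof.
move=> HX v.
have hb : block_psd (fun _ _ : 'I_1 => X) by move=> u; rewrite !big_ord1; apply: HX.
by have := Tcp hb (fun _ => v); rewrite !big_ord1.
Qed.

Let f Y := \tr Y - q psi (T Y) psi.

Lemma f_ge0 Y : psd Y -> 0 <= f Y.
Proof. by move=> HY; rewrite /f subr_ge0 -Ttp; apply: q_le_tr; apply: Tpsd. Qed.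
Lemma fD Y Z : f (Y + Z) = f Y + f Z.
Proof. by rewrite /f TD qD mxtraceD; ring. Qed.
Lemma fZ a Y : f (a *: Y) = a * f Y.
Proof. by rewrite /f TZ qZ mxtraceZ; ring. Qed.
Lemma fP : f P = 0.
Proof. by rewrite /f TP trP qpsiP subrr. Qed.

Lemma mono X : psd X -> q psi X psi <= q psi (T X) psi.
Proof.
move=> HX.
pose c := f (P *m X *m Q + Q *m X *m P).
pose g := f (Q *m X *m Q).
have hg : 0 <= g by apply: f_ge0; rewrite -{2}adjQ; apply: psd_conj.
have c0 : c = 0.
  apply: (t_trick hg) => t.
  pose B := P + t%:C *: Q.
  have hB : adj B = B by rewrite /B adjD adjZ adjP adjQ conjR.
  have E : B *m X *m B = P *m X *m P + t%:C *: (P *m X *m Q + Q *m X *m P)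
                          + (t * t)%:C *: (Q *m X *m Q).
    rewrite /B !(mulmxDl, mulmxDr) -!scalemxAl -!scalemxAr scalerA scalerDr.
    have -> : (t * t)%:C = t%:C * t%:C :> C by rewrite rmorphM.
    by rewrite -!addrA; congr (_ + _); rewrite addrCA.
  have := f_ge0 (psd_conj B HX); rewrite hB E !fD !fZ PXP fZ fP mulr0 add0r.
  by [].
have EX : X = P *m X *m P + (P *m X *m Q + Q *m X *m P) + Q *m X *m Q.
  rewrite -{1}(mul1mx X) -{1}(mulmx1 X) -PQ_id.
  by rewrite mulmxDl !mulmxDr !mulmxA !addrA.
have : f X = g by rewrite {1}EX fD fD PXP fZ fP mulr0 add0r -/c c0 add0r.
move=> e.
have h2 : g <= \tr (Q *m X *m Q).
  rewrite /g /f lerBlDr lerDl; apply: Tpsd => //; rewrite -{2}adjQ; exact: psd_conj.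
have : \tr X - q psi (T X) psi <= \tr X - q psi X psi.
  by rewrite -trQZQ; move: h2; rewrite -e.
by rewrite lerD2l lerN2.
Qed.


Lemma psd_null A v w : psd A -> q v A v = 0 -> q w A v = 0 /\ q v A w = 0.
Proof.
move=> HA hv.
have c1 : q v A w + q w A v = 0.
  apply: (t_trick (psd_q w HA)) => t.
  have := psd_q (v + t%:C *: w) HA.
  rewrite !(qDl, qDr, qZl, qZr).
  have cr : Num.conj (t%:C) = t%:C :> C by exact: conjR.
  by rewrite cr hv add0r rmorphM /= mulrDr !mulrA !addrA.
have ci : Num.conj ('i : C) = - 'i by simpc.
have ii : - 'i * 'i = 1 :> C by rewrite mulNr -expr2 sqr_i opprK.
have c2 : 'i * q v A w - 'i * q w A v = 0.
  apply: (t_trick (psd_q w HA)) => t.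
  have cr : Num.conj (t%:C) = t%:C :> C by exact: conjR.
  pose s := t%:C * 'i.
  have := psd_q (v + s *: w) HA.
  rewrite !(qDl, qDr, qZl, qZr) hv add0r.
  have e1 : Num.conj s * (s * q w A w) = (t * t)%:C * q w A w.
    rewrite mulrA; congr (_ * _); rewrite /s !rmorphM /= cr ci.
    transitivity (t%:C * t%:C * (- 'i * 'i)); first by ring.
    by rewrite ii mulr1.
  have e2 : s * q v A w + Num.conj s * q w A v = t%:C * ('i * q v A w - 'i * q w A v).
    by rewrite /s rmorphM /= cr ci; ring.
  by rewrite e1 addrA e2.
have e : q v A w = q w A v.
  apply/eqP; rewrite -subr_eq0; move: c2; rewrite -mulrBr => /eqP.
  rewrite mulf_eq0 => /orP[/eqP hi|//].
  by case: hi => /eqP; rewrite oner_eq0.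
have e0 : q v A w = 0.
  move: c1; rewrite -e -mulr2n -mulr_natr => /eqP.
  by rewrite mulf_eq0 pnatr_eq0 orbF => /eqP.
by split; rewrite -?e.
Qed.


Lemma ev_split k : ev k = P *m ev k + Q *m ev k.
Proof. by rewrite -mulmxDl PQ_id mul1mx. Qed.

Lemma pure_fixed A : density A -> q psi A psi = 1 -> A = P.
Proof.
move=> [HA tA] h.
have psdQ : psd (Q *m A *m Q) by rewrite -{2}adjQ; apply: psd_conj.
have hQ : \tr (Q *m A *m Q) = 0 by rewrite trQZQ tA h subrr.
have diag k : (Q *m A *m Q) k k = 0.
  by move: hQ; rewrite /mxtrace => /psumr_eq0P; apply => // i _; apply: psd_diag.
have nk k : q (Q *m ev k) A (Q *m ev k) = 0.
  by rewrite -{1}adjQ -qM -qMr q_ev diag.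
apply/matrixP=> i j.
rewrite -q_ev (ev_split i) (ev_split j) !(qDl, qDr).
rewrite (proj1 (psd_null _ HA (nk j))) (proj2 (psd_null _ HA (nk i))).
rewrite (proj1 (psd_null _ HA (nk j))) !addr0.
by rewrite -{1}adjP -qM -qMr PXP h scale1r q_ev.
Qed.

Lemma Tdensity X : density X -> density (T X).
Proof. by move=> [H1 H2]; split; [apply: Tpsd | rewrite Ttp]. Qed.

Lemma iter_density n X : density X -> density (iter n T X).
Proof. by move=> H; elim: n => //= n IH; apply: Tdensity. Qed.


Lemma Re_realM (c : R) (z : C) : complex.Re (c%:C * z) = c * complex.Re z.
Proof. by case: z => a b; simpc. Qed.
Lemma Im_realM (c : R) (z : C) : complex.Im (c%:C * z) = c * complex.Im z.
Proof. by case: z => a b; simpc. Qed.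

Hypothesis Terg : ergodic T.

Lemma density_P : density P.
Proof. by split; [apply: psd_P | apply: trP]. Qed.

Lemma fixed_is_P sg : density sg -> T sg = sg -> sg = P.
Proof.
move=> Hd Hf; have [r0 [_ [_ U]]] := Terg.
by rewrite (U _ Hd Hf) (U _ density_P TP).
Qed.

Definition aseq (rho : M) n := complex.Re (q psi (iter n T rho) psi).

Lemma aseq_step rho n : density rho -> aseq rho n <= aseq rho n.+1.
Proof.
move=> Hr; have := mono (iter_density n Hr).1.
by rewrite lecE => /andP[_].
Qed.

Lemma aseq_mono rho n m : density rho -> (n <= m)%N -> aseq rho n <= aseq rho m.
Proof.
move=> Hr /subnKC <-; elim: (m - n)%N => [|k IH]; first by rewrite addn0.
by rewrite addnS; apply: le_trans IH (aseq_step _ Hr).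
Qed.

Definition ces rho N : M := ((N.+1)%:R^-1 : R)%:C *: \sum_(n < N.+1) iter n T rho.

Lemma cN_C N : ((N.+1)%:R^-1 : R)%:C = ((N.+1)%:R : C)^-1.
Proof. by rewrite fmorphV rmorph_nat. Qed.

Lemma ces_density rho N : density rho -> density (ces rho N).
Proof.
move=> Hr; split.
  apply: psd_scale; first by rewrite ler0c invr_ge0 ler0n.
  by apply: psd_sum => n _; apply: (iter_density n Hr).1.
rewrite mxtraceZ raddf_sum /=.
under eq_bigr do rewrite (iter_density _ Hr).2.
by rewrite sumr_const card_ord cN_C mulVf // pnatr_eq0.
Qed.

Lemma T_ces rho N :
  T (ces rho N) - ces rho N = ((N.+1)%:R^-1 : R)%:C *: (iter N.+1 T rho - rho).
Proof.
rewrite /ces TZ T_sum -scalerBr; congr (_ *: _).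
rewrite -sumrB.
have := @telescope_sumr _ 0 N.+1 (fun k => iter k T rho) (leq0n _).
by rewrite big_mkord => <-.
Qed.

Lemma reach rho : density rho -> forall e, 0 < e -> exists n, 1 - e <= aseq rho n.
Proof.
move=> Hr e e0; apply: contrapT => nH.
have H n : aseq rho n < 1 - e.
  by rewrite ltNge; apply/negP => h; apply: nH; exists n.
pose s := ces rho.
have Hs : forall n, density (s n) := fun n => ces_density n Hr.
have [sg csg] := exists_clus (fun n i j => density_bound i j (Hs n)).
have dsg := clus_density Hs csg.
have fsg : T sg = sg.
  apply/matrixP => i j; apply/eqP; rewrite -subr_eq0; apply/eqP.
  have -> : T sg i j - sg i j = (T sg - sg) i j by rewrite !mxE.
  apply: (clus_lim (L := fun X => (T X - X) i j) _ csg) => [a X Y|e' e'0].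
    by rewrite Tlin !mxE; ring.
  have e2 : 0 <= 2 / e' by rewrite divr_ge0 // ltW.
  exists (Num.Def.archi_bound (2 / e')) => N hN.
  have hN1 : 2 / e' < N.+1%:R.
    apply: lt_le_trans (archi_boundP e2) _; rewrite ler_nat; exact: leqW.
  rewrite ltr_pdivrMr // in hN1.
  have hb : forall b : bool, `|prb b ((iter N.+1 T rho - rho) i j)| <= 2.
    move=> b; have [a1 a2] := density_bound i j (iter_density N.+1 Hr).
    have [b1 b2] := density_bound i j Hr.
    rewrite !mxE; case: b => /=; rewrite ?ReB ?ImB;
      (apply: le_trans (ler_normB _ _) _; rewrite -[2%:R]/(1 + 1); exact: lerD).
  have key : forall b : bool, `|prb b ((T (s N) - s N) i j - 0)| <= e'.
    move=> b; rewrite subr0 /s T_ces mxE.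
    have -> : prb b (((N.+1)%:R^-1 : R)%:C * (iter N.+1 T rho - rho) i j)
            = (N.+1)%:R^-1 * prb b ((iter N.+1 T rho - rho) i j).
      by case: b => /=; rewrite ?Re_realM ?Im_realM.
    rewrite normrM ger0_norm ?invr_ge0 ?ler0n // mulrC ler_pdivrMr ?ltr0n //.
    apply: le_trans (hb b) _; rewrite mulrC; exact: ltW.
  by split; [exact: (key true) | exact: (key false)].
have sgP := fixed_is_P dsg fsg.
have e2 : 0 < e / 2 by rewrite divr_gt0.
have [N [_ [h1 _]]] := clus_approx (lfun_q psi) csg e2 0%N.
rewrite sgP qpsiP ReB /= in h1.
have hRe : complex.Re (q psi (s N) psi) <= 1 - e.
  rewrite /s /ces qZ Re_realM q_sum Re_sum.
  have -> : \sum_(i < N.+1) complex.Re (q psi (iter i T rho) psi) = \sum_(i < N.+1) aseq rho i by [].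
  apply: (@le_trans _ _ (N.+1%:R^-1 * \sum_(i < N.+1) (1 - e))).
    apply: ler_wpM2l; first by rewrite invr_ge0 ler0n.
    by apply: ler_sum => i _; apply: ltW.
  rewrite sumr_const card_ord -[(1 - e) *+ _]mulr_natr mulrCA mulVf ?mulr1 //.
move: h1; rewrite ler_norml => /andP[h _]; lra.
Qed.

Lemma conv rho : density rho -> mx_cvg (fun n => iter n T rho) P.
Proof.
move=> Hr; apply: clus_cvg => [n i j|phi hphi sg csg].
  exact: density_bound (iter_density n Hr).
have dsg := clus_density (fun k => iter_density (phi k) Hr) csg.
apply: pure_fixed => //.
apply: (clus_lim (lfun_q psi) csg) => e e0.
have [n0 hn0] := reach Hr e0.
exists n0 => N hN.
have hd := iter_density (phi N) Hr.
have := psd_q psi hd.1; rewrite lecE => /andP[/eqP hi _].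
move: (q_le_tr hd.1); rewrite hd.2 lecE => /andP[_ hle'].
have hm := aseq_mono Hr (leq_trans hN (hphi N)).
rewrite ReB ImB /= hi subrr normr0; split; last exact: ltW.
rewrite /aseq in hn0 hm; rewrite /= in hle'.
rewrite ler_norml; apply/andP; split; lra.
Qed.

End S.

Theorem mainTheorem15 (R : realType) (d : nat)
  (T : 'M[R[i]]_d -> 'M[R[i]]_d) (psi1 : 'cV[R[i]]_d) :
  quantum_channel T ->
  ergodic T ->
  (adj psi1 *m psi1) 0 0 = 1 ->
  T (psi1 *m adj psi1) = psi1 *m adj psi1 ->
  mixing T /\
  (forall rho : 'M[R[i]]_d, density rho ->
     mx_cvg (fun n => iter n T rho) (psi1 *m adj psi1)).
Proof.
move=> [Tlin [Tcp Ttp]] Terg hpsi TP.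
have TP' : T (P psi1) = P psi1 by rewrite PE.
have cv := conv hpsi Tlin Tcp Ttp TP' Terg.
have dP := density_P hpsi.
rewrite -PE; split => //.
by exists (P psi1); split.
Qed.
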